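(* Let $p(g\mid\mathbf w)=\sum_{k\in\mathcal A}\theta_kP_{(k)}(w_{-k},g)$ be an imitation kernel on a finite set $G$ with $\gcd(\mathcal A)=1$, and assume the $G$-stochastic function $P_{(\cdot)}$ is irreducible and aperiodic. Let $\hat\lambda$ be the unique invariant distribution of $\hat P=\sum_{k\in\mathcal A}\theta_kP_{(k)}$. Then for every $n\in\mathbb Z$ and every configuration $\mathbf w\in G^{\mathbb Z}$, the law of $X_n^{r,\mathbf w}$ converges to $\hat\lambda$ as $r\to-\infty$.
   Context: $\mathcal A\subset\mathbb N_+$, $\theta$ a probability on $\mathcal A$ with $\theta_k>0$, $P_{(k)}$ stochastic matrices on $G$. Words $\mathcal A^*=\bigcup_{n\ge1}\mathcal A^n$, $P_{\mathbf a}=P_{(a_n)}\cdots P_{(a_1)}$ and depth $s(\mathbf a)=\sum a_i$ for $\mathbf a=(a_1,\dots,a_n)$. $P_{(\cdot)}$ is irreducible if for all $i,j$ some word has $P_{\mathbf a}(i,j)>0$; aperiodic if moreover $\gcd\{s(\mathbf a):P_{\mathbf a}(i,i)>0\}=1$ for every $i$. For $\mathbf w\in G^{\mathbb Z}$ and $r\in\mathbb Z$, $\mathbf X^{r,\mathbf w}$ is the process with $X^{r,\mathbf w}_n=w_n$ for $n\le r$ and $P(X_n^{r,\mathbf w}=g\mid X_{n-1}^{r,\mathbf w},X_{n-2}^{r,\mathbf w},\dots)=p(g\mid X_{n-1}^{r,\mathbf w},X_{n-2}^{r,\mathbf w},\dots)$ a.s. for $n>r$. *)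

(* Defs.v *)
From Stdlib Require Import Reals ZArith ClassicalEpsilon.
From mathcomp Require Import all_boot.
Set Implicit Arguments. Unset Strict Implicit. Unset Printing Implicit Defensive.

Open Scope R_scope.

(* Total "sum of a series": the value l with infinite_sum f l, when it exists
   (chosen by classical epsilon; only used for convergent series of
   nonnegative bounded terms). *)
Definition series (f : nat -> R) : R :=
  epsilon (inhabits R0) (fun l => infinite_sum f l).

Definition stochastic (G : finType) (M : G -> G -> R) : Prop :=
  (forall i j, 0 <= M i j) /\ (forall i, \big[Rplus/0]_(j : G) M i j = 1).

Definition is_word (A : nat -> Prop) (a : list nat) : Prop :=
  a <> nil /\ List.Forall A a.

Definition depth (a : list nat) : nat := List.fold_right addn 0%N a.

(* P_a = P_(a_n) ... P_(a_1) for a = (a_1,...,a_n):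
   P_(a_1 :: rest) = P_rest * P_(a_1)  (matrix product). *)
Fixpoint wordP (G : finType) (P : nat -> G -> G -> R) (a : list nat) : G -> G -> R :=
  match a with
  | nil => fun i j => if i == j then 1 else 0
  | a1 :: rest => fun i j => \big[Rplus/0]_(h : G) (wordP P rest i h * P a1 h j)
  end.

Definition irreducible (G : finType) (A : nat -> Prop) (P : nat -> G -> G -> R) : Prop :=
  forall i j : G, exists a, is_word A a /\ 0 < wordP P a i j.

Definition aperiodic (G : finType) (A : nat -> Prop) (P : nat -> G -> G -> R) : Prop :=
  irreducible A P /\
  forall i : G, forall d : nat,
    (forall a, is_word A a -> 0 < wordP P a i i -> (d %| depth a)%N) -> d = 1%N.

Definition gcd_one (A : nat -> Prop) : Prop :=
  forall d : nat, (forall k, A k -> (d %| k)%N) -> d = 1%N.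

Definition pker (G : finType) (theta : nat -> R) (P : nat -> G -> G -> R)
  (w : Z -> G) (t : Z) (g : G) : R :=
  series (fun k => theta k * P k (w (t - Z.of_nat k)%Z) g).

(* The configuration that equals w up to time r and then follows gs
   (gs i is the value at time r+1+i). *)
Definition ext (G : finType) (w : Z -> G) (r : Z) (m : nat) (gs : {ffun 'I_m -> G})
  (t : Z) : G :=
  if (t <=? r)%Z then w t
  else match insub (Z.to_nat (t - r - 1)) : option 'I_m with
       | Some i => gs i
       | None => w t
       end.

(* Probability that X_{r+1},...,X_{r+m} equal gs (finite-dimensional law of
   X^{r,w}, determined by the conditional probabilities p). *)
Definition path_prob (G : finType) (theta : nat -> R) (P : nat -> G -> G -> R)
  (w : Z -> G) (r : Z) (m : nat) (gs : {ffun 'I_m -> G}) : R :=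
  \big[Rmult/1]_(i < m) pker theta P (ext w r gs) (r + 1 + Z.of_nat i)%Z (gs i).

Definition lawX (G : finType) (theta : nat -> R) (P : nat -> G -> G -> R)
  (r : Z) (w : Z -> G) (n : Z) (g : G) : R :=
  if (n <=? r)%Z then (if w n == g then 1 else 0)
  else \big[Rplus/0]_(gs : {ffun 'I_(Z.to_nat (n - r)) -> G} | ext w r gs n == g)
         path_prob theta P w r gs.

Definition is_Phat (G : finType) (theta : nat -> R) (P : nat -> G -> G -> R)
  (Q : G -> G -> R) : Prop :=
  forall i j, infinite_sum (fun k => theta k * P k i j) (Q i j).

Definition invariant_dist (G : finType) (Q : G -> G -> R) (lam : G -> R) : Prop :=
  (forall g, 0 <= lam g) /\ \big[Rplus/0]_(g : G) lam g = 1 /\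
  forall j, \big[Rplus/0]_(i : G) (lam i * Q i j) = lam j.

(* Main.v *)
From HB Require Import structures.
Require Import Defs.
From Stdlib Require Import Reals ZArith Lra Lia ClassicalEpsilon Classical FunctionalExtensionality.
From mathcomp Require Import all_boot.
From Coquelicot Require Import Coquelicot.
From mathcomp Require Import zify.
Open Scope R_scope.
Set Implicit Arguments. Unset Strict Implicit.

Lemma Rplus_assoc' : associative Rplus. Proof. by move=> *; rewrite Rplus_assoc. Qed.
Lemma Rmult_assoc' : associative Rmult. Proof. by move=> *; rewrite Rmult_assoc. Qed.
HB.instance Definition _ := Monoid.isComLaw.Build R 0 Rplus Rplus_assoc' Rplus_comm Rplus_0_l.
HB.instance Definition _ := Monoid.isComLaw.Build R 1 Rmult Rmult_assoc' Rmult_comm Rmult_1_l.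
HB.instance Definition _ := Monoid.isMulLaw.Build R 0 Rmult Rmult_0_l Rmult_0_r.
HB.instance Definition _ := Monoid.isAddLaw.Build R Rmult Rplus Rmult_plus_distr_r Rmult_plus_distr_l.

Lemma test (G : finType) (F1 F2 : G -> R) a : \big[Rplus/0]_(g : G) (a * (F1 g + F2 g)) = a * \big[Rplus/0]_g F1 g + a * \big[Rplus/0]_g F2 g.
Proof. rewrite !big_distrr -big_split. apply: eq_bigr => i _ /=. ring. Qed.

Notation isum := infinite_sum.

Lemma isum_ext a b l : (forall n, a n = b n) -> isum a l -> isum b l.
Proof.
move=> E H eps He; case: (H eps He) => N HN; exists N => n Hn.
have -> : sum_f_R0 b n = sum_f_R0 a n by elim: n {Hn} => [|n IH] /=; rewrite ?IH E.
exact: HN.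
Qed.

Lemma isum_plus a b la lb : isum a la -> isum b lb -> isum (fun n => a n + b n) (la + lb).
Proof.
move=> Ha Hb.
have := CV_plus _ _ _ _ Ha Hb => H eps He; case: (H eps He) => N HN; exists N => n Hn.
have -> : sum_f_R0 (fun n => a n + b n) n = sum_f_R0 a n + sum_f_R0 b n.
  by elim: n {Hn} => [|n IH] /=; rewrite ?IH; ring.
exact: HN.
Qed.

Lemma isum_scal c a l : isum a l -> isum (fun n => c * a n) (c * l).
Proof.
move=> Ha.
have Hc : Un_cv (fun _ => c) c by move=> eps He; exists 0%nat => n _; rewrite /Rdist Rminus_diag Rabs_R0.
have := CV_mult _ _ _ _ Hc Ha => H eps He; case: (H eps He) => N HN; exists N => n Hn.
have -> : sum_f_R0 (fun n => c * a n) n = c * sum_f_R0 a n.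
  by elim: n {Hn} => [|n IH] /=; rewrite ?IH; ring.
exact: HN.
Qed.

Lemma isum_scalr c a l : isum a l -> isum (fun n => a n * c) (l * c).
Proof. move=> H; rewrite Rmult_comm; apply: isum_ext (isum_scal c H) => n; ring. Qed.

Lemma isum_opp a l : isum a l -> isum (fun n => - a n) (- l).
Proof. move=> H; have := isum_scal (-1) H; rewrite -Ropp_mult_distr_l Rmult_1_l.
apply: isum_ext => n; ring. Qed.

Lemma isum_minus a b la lb : isum a la -> isum b lb -> isum (fun n => a n - b n) (la - lb).
Proof. move=> Ha Hb; exact: isum_plus Ha (isum_opp Hb). Qed.

Lemma isum_unique a l1 l2 : isum a l1 -> isum a l2 -> l1 = l2.
Proof. exact: uniqueness_sum. Qed.

Lemma isum_le a b la lb : (forall n, a n <= b n) -> isum a la -> isum b lb -> la <= lb.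
Proof.
move=> H Ha Hb; apply: (Rle_cv_lim _ Ha Hb) => n.
apply: sum_Rle => k _; exact: H.
Qed.

Lemma isum_ge0 a l : (forall n, 0 <= a n) -> isum a l -> 0 <= l.
Proof.
move=> H Ha; have H0 : isum (fun _ => 0) 0.
  by move=> eps He; exists 0%nat => n _; rewrite sum_cte Rmult_0_l /Rdist Rminus_diag Rabs_R0.
exact: isum_le H H0 Ha.
Qed.

Lemma isum_abs a b la lb : (forall n, Rabs (a n) <= b n) -> isum a la -> isum b lb -> Rabs la <= lb.
Proof.
move=> H Ha Hb; apply: Rabs_le; split.
- have := isum_opp Hb => Hb'; rewrite -(Ropp_involutive la); apply: Ropp_le_contravar.
  apply: (isum_le _ (isum_opp Ha) Hb) => n; have := H n; move/Rabs_le_between => ?; lra.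
- apply: (isum_le _ Ha Hb) => n; have := H n; move/Rabs_le_between => ?; lra.
Qed.

Lemma isum_exists a b lb : (forall n, Rabs (a n) <= b n) -> isum b lb -> exists la, isum a la.
Proof.
move=> H Hb.
have : ex_series a.
  apply: (@ex_series_le R_AbsRing R_CompleteNormedModule a b) => [n|].
    exact: H.
  by exists lb; apply/is_series_Reals.
case=> la Hla; exists la; exact/is_series_Reals.
Qed.

Lemma isum_seq (I : Type) (s : seq I) (a : I -> nat -> R) (l : I -> R) :
  (forall i, isum (a i) (l i)) ->
  isum (fun n => \big[Rplus/0]_(i <- s) a i n) (\big[Rplus/0]_(i <- s) l i).
Proof.
move=> H; elim: s => [|x s IH].
  apply: (isum_ext (a := fun _ => 0)) => [n|]; first by rewrite big_nil.
  rewrite big_nil; move=> eps He; exists 0%nat => n _; rewrite sum_cte Rmult_0_l /Rdist Rminus_diag Rabs_R0 //.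
rewrite big_cons; apply: (isum_ext (a := fun n => a x n + \big[Rplus/0]_(i <- s) a i n)) => [n|].
  by rewrite big_cons.
exact: isum_plus.
Qed.

Lemma isum_big (I : finType) (a : I -> nat -> R) (l : I -> R) :
  (forall i, isum (a i) (l i)) ->
  isum (fun n => \big[Rplus/0]_(i : I) a i n) (\big[Rplus/0]_(i : I) l i).
Proof. exact: isum_seq. Qed.

Lemma sum_delta j c n : sum_f_R0 (fun m => if m == j then c else 0) n = if (j <= n)%N then c else 0.
Proof.
elim: n => [|n IH] /=; first by case: j.
rewrite IH; case: (ltngtP j n.+1) => H.
- have H1 : (j <= n)%N by rewrite -ltnS.
  by rewrite H1 Rplus_0_r.
- have H1 : (j <= n)%N = false by apply/negbTE; rewrite -ltnNge ltnW.
  by rewrite H1 Rplus_0_r.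
- by rewrite H ltnn Rplus_0_l.
Qed.

Lemma isum_delta j c : isum (fun m => if m == j then c else 0) c.
Proof.
move=> eps He; exists j => n Hn.
by rewrite sum_delta ifT ?(introT leP Hn) // /Rdist Rminus_diag Rabs_R0.
Qed.

Lemma sum_shift j a n : sum_f_R0 (fun m => if (j <= m)%N then a (m - j)%N else 0) n
   = if (j <= n)%N then sum_f_R0 a (n - j) else 0.
Proof.
elim: n => [|n IH] /=; first by case: j.
rewrite IH; case: (ltngtP j n.+1) => H.
- have H1 : (j <= n)%N by rewrite -ltnS.
  rewrite H1 subSn //=.
- have H1 : (j <= n)%N = false by apply/negbTE; rewrite -ltnNge ltnW.
  have H2 : (j <= n.+1)%N = false by apply/negbTE; rewrite -ltnNge.
  by rewrite ?H1 ?H2 Rplus_0_r.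
- by rewrite H ltnn ?leqnn subnn Rplus_0_l.
Qed.

Lemma isum_shift j a l : isum a l -> isum (fun m => if (j <= m)%N then a (m - j)%N else 0) l.
Proof.
move=> H eps He; case: (H eps He) => N HN; exists (N + j)%nat => n Hn.
have Hjn : (j <= n)%N by apply/leP; lia.
rewrite sum_shift Hjn; apply: HN; apply/leP; have := Hn; move/leP => ?.
rewrite leq_subRL //; apply/leP; move/leP: Hn; lia.
Qed.

Lemma sum_trunc W a n : sum_f_R0 (fun m => if (m <= W)%N then a m else 0) n = sum_f_R0 a (minn n W).
Proof.
elim: n => [|n IH] /=; first by rewrite min0n ?leq0n.
rewrite IH; case: (leqP n.+1 W) => H.
- by rewrite (minn_idPl (ltnW H)).
- rewrite Rplus_0_r; congr sum_f_R0; apply/minn_idPr; by rewrite -ltnS.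
Qed.

Lemma isum_trunc W a : isum (fun m => if (m <= W)%N then a m else 0) (sum_f_R0 a W).
Proof.
move=> eps He; exists W => n Hn; rewrite sum_trunc (minn_idPr _); last by apply/leP.
by rewrite /Rdist Rminus_diag Rabs_R0.
Qed.

Lemma isum_tail_small a l eps : isum a l -> 0 < eps -> exists W, Rabs (l - sum_f_R0 a W) < eps.
Proof.
move=> H He; case: (H eps He) => N HN; exists N; rewrite Rabs_minus_sym; exact: HN.
Qed.

Lemma big_Rle (I : Type) (r : seq I) (P : pred I) (F1 F2 : I -> R) :
  (forall i, P i -> F1 i <= F2 i) -> \big[Rplus/0]_(i <- r | P i) F1 i <= \big[Rplus/0]_(i <- r | P i) F2 i.
Proof. move=> H; elim/big_rec2: _ => [|i y1 y2 Pi Hy]; first exact: Rle_refl. have := H i Pi; lra. Qed.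

Lemma big_Rge0 (I : Type) (r : seq I) (P : pred I) (F : I -> R) :
  (forall i, P i -> 0 <= F i) -> 0 <= \big[Rplus/0]_(i <- r | P i) F i.
Proof. move=> H; elim/big_rec: _ => [|i y Pi Hy]; first exact: Rle_refl. have := H i Pi; lra. Qed.

Lemma big_Rabs (I : Type) (r : seq I) (P : pred I) (F : I -> R) :
  Rabs (\big[Rplus/0]_(i <- r | P i) F i) <= \big[Rplus/0]_(i <- r | P i) Rabs (F i).
Proof.
elim/big_rec2: _ => [|i y1 y2 Pi Hy]; first by rewrite Rabs_R0; exact: Rle_refl.
apply: Rle_trans (Rabs_triang _ _) _; lra.
Qed.

Lemma big_Rle_term (I : finType) (F : I -> R) i : (forall j, 0 <= F j) -> F i <= \big[Rplus/0]_(j : I) F j.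
Proof.
move=> H; rewrite (bigD1 i) //=; have := @big_Rge0 I (index_enum I) (fun j => j != i) F (fun j _ => H j); lra.
Qed.

Lemma big_Ropp (I : Type) (r : seq I) (P : pred I) (F : I -> R) :
  \big[Rplus/0]_(i <- r | P i) (- F i) = - \big[Rplus/0]_(i <- r | P i) F i.
Proof. elim/big_rec2: _ => [|i y1 y2 Pi ->]; [ring | ring]. Qed.

Lemma big_Rminus (I : Type) (r : seq I) (P : pred I) (F1 F2 : I -> R) :
  \big[Rplus/0]_(i <- r | P i) (F1 i - F2 i) = \big[Rplus/0]_(i <- r | P i) F1 i - \big[Rplus/0]_(i <- r | P i) F2 i.
Proof. rewrite /Rminus big_split big_Ropp //. Qed.


Section Abs.
Variable G : finType.
Variable th : nat -> R.
Variable P : nat -> G -> G -> R.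
Hypothesis th0 : th 0%N = 0.

Definition Idm : G -> G -> R := fun i j => if i == j then 1 else 0.
Definition mm (M N : G -> G -> R) : G -> G -> R := fun i j => \big[Rplus/0]_(h : G) (M i h * N h j).

Fixpoint Gm (j m : nat) : G -> G -> R :=
  match j with
  | 0 => fun _ _ => 0
  | S j' => fun i g => Gm j' m i g + th (m - j') * mm (P (m - j')) (if j' == 0%N then Idm else Gm j' j') i g
  end.

Definition Hm (j : nat) : G -> G -> R := if j == 0%N then Idm else Gm j j.

Definition Rec (x : Z -> G -> R) (v : Z) : Prop :=
  forall g, isum (fun k => th k * \big[Rplus/0]_(h : G) (x (v - Z.of_nat k)%Z h * P k h g)) (x v g).

Lemma mm_Idr M i g : mm M Idm i g = M i g.
Proof.
rewrite /mm (bigD1 g) //= /Idm eqxx Rmult_1_r big1 ?Rplus_0_r // => h /negbTE ->; ring.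
Qed.

Lemma sum_swap3 (x : G -> R) (c : R) (A B : G -> G -> R) g :
  \big[Rplus/0]_(h : G) (c * \big[Rplus/0]_(h1 : G) (x h1 * A h1 h) * B h g) =
  \big[Rplus/0]_(h1 : G) (x h1 * (c * \big[Rplus/0]_(h : G) (A h1 h * B h g))).
Proof.
rewrite (eq_bigr (fun h => \big[Rplus/0]_(h1 : G) (c * x h1 * A h1 h * B h g))); last first.
  move=> h _; rewrite big_distrr big_distrl /=; apply: eq_bigr => h1 _; ring.
rewrite exchange_big /=; apply: eq_bigr => h1 _.
rewrite !big_distrr /=; apply: eq_bigr => h _; ring.
Qed.

Lemma claim (x : Z -> G -> R) (t : Z) (j : nat) : (1 <= j)%N ->
  (forall l, (l < j)%N -> Rec x (t - Z.of_nat l)%Z) ->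
  forall g, isum (fun m => if (j <= m)%N then \big[Rplus/0]_(h : G) (x (t - Z.of_nat m)%Z h * Gm j m h g) else 0) (x t g).
Proof.
elim: j => [//|j IH] _ HR g.
case: (posnP j) => [Hj0|Hj].
- subst j; have := HR 0%N isT g; rewrite Z.sub_0_r.
  apply: isum_ext => m; case: m => [|m] /=.
    by rewrite th0 Rmult_0_l.
  rewrite big_distrr /=; apply: eq_bigr => h _; rewrite Rplus_0_l subn0 mm_Idr; ring.
- have IHj := IH Hj (fun l Hl => HR l (ltn_trans Hl (ltnSn j))) g.
  (* the m = j term *)
  pose c := \big[Rplus/0]_(h : G) (x (t - Z.of_nat j)%Z h * Hm j h g).
  have Hc : isum (fun m => if (j <= m)%N then
       \big[Rplus/0]_(h : G) (th (m - j) * \big[Rplus/0]_(h1 : G) (x (t - Z.of_nat m)%Z h1 * P (m - j) h1 h) * Hm j h g)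
       else 0) c.
    have Ha : isum (fun k => \big[Rplus/0]_(h : G) (th k * \big[Rplus/0]_(h1 : G) (x (t - Z.of_nat j - Z.of_nat k)%Z h1 * P k h1 h) * Hm j h g)) c.
      apply: isum_big => h; apply: isum_scalr; exact: (HR j (ltnSn j) h).
    have := isum_shift j Ha; apply: isum_ext => m; case: ifP => // Hjm.
    apply: eq_bigr => h _; congr (_ * _ * _); apply: eq_bigr => h1 _.
    by do 2 f_equal; lia.
  have Hd := isum_delta j c.
  have := isum_plus (isum_minus IHj Hd) Hc.
  have -> : x t g - c + c = x t g by ring.
  apply: isum_ext => m.
  case: (ltngtP j m) => Hjm.
  + rewrite Rminus_0_r sum_swap3 -big_split /=; apply: eq_bigr => h _.
    rewrite /mm /Hm; ring.
  + ring.
  + subst m; rewrite subnn th0 /c /Hm (gtn_eqF Hj).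
    rewrite [X in _ - _ + X]big1 ?Rplus_0_r; last by move=> h _; rewrite !Rmult_0_l.
    rewrite /Rminus Rplus_opp_r //.
Qed.


Hypothesis hnn : forall k i j, 0 <= th k * P k i j.
Hypothesis hth : forall k, 0 <= th k.
Hypothesis hrow : forall k i, th k * \big[Rplus/0]_(j : G) P k i j = th k.

Lemma Idm_ge0 i j : 0 <= Idm i j.
Proof. rewrite /Idm; case: eqP => _; lra. Qed.

Lemma Gm_ge0 j m i g : 0 <= Gm j m i g.
Proof.
elim: j m i g => [|j IH] m i g /=; first exact: Rle_refl.
apply: Rplus_le_le_0_compat; first exact: IH.
rewrite /mm big_distrr /=; apply: big_Rge0 => h _; rewrite -Rmult_assoc.
apply: Rmult_le_pos; first exact: hnn.
case: (j == 0%N); [exact: Idm_ge0 | exact: IH].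
Qed.

Lemma Hm_ge0 j i g : 0 <= Hm j i g.
Proof. rewrite /Hm; case: (j == 0%N); [exact: Idm_ge0 | exact: Gm_ge0]. Qed.

Fixpoint gr (j m : nat) : R :=
  match j with
  | 0 => 0
  | S j' => gr j' m + th (m - j') * (if j' == 0%N then 1 else gr j' j')
  end.

Lemma Idm_row i : \big[Rplus/0]_(g : G) Idm i g = 1.
Proof. rewrite (bigD1 i) //= /Idm eqxx big1 ?Rplus_0_r // => h; rewrite eq_sym => /negbTE -> //. Qed.

Lemma Gm_row j m i : \big[Rplus/0]_(g : G) Gm j m i g = gr j m.
Proof.
elim: j m i => [|j IH] m i /=; first by rewrite big1.
rewrite big_split /= IH; congr (_ + _).
rewrite -big_distrr /= /mm exchange_big /=.
have -> : \big[Rplus/0]_(h : G) \big[Rplus/0]_(g : G) (P (m - j) i h * (if j == 0%N then Idm else Gm j j) h g)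
   = \big[Rplus/0]_(h : G) (P (m - j) i h * (if j == 0%N then 1 else gr j j)).
  apply: eq_bigr => h _; rewrite -big_distrr /=; congr (_ * _).
  by case: (j == 0%N); rewrite ?Idm_row ?IH.
rewrite -big_distrl /= -Rmult_assoc hrow //.
Qed.

Lemma contract (v : G -> R) (M : G -> G -> R) (rho dl : R) (i0 : G) :
  \big[Rplus/0]_(h : G) v h = 0 -> (forall h g, 0 <= M h g) ->
  (forall h, \big[Rplus/0]_(g : G) M h g = rho) -> 0 <= dl -> (forall h, dl <= M h i0) ->
  \big[Rplus/0]_(g : G) Rabs (\big[Rplus/0]_(h : G) (v h * M h g))
   <= (\big[Rplus/0]_(h : G) Rabs (v h)) * (rho - dl).
Proof.
move=> Hv HM Hrho Hdl Hi0.
pose c g := if g == i0 then dl else 0.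
have Hc : forall h g, 0 <= M h g - c g.
  move=> h g; rewrite /c; case: eqP => [->|_]; have := Hi0 h; have := HM h g; lra.
have E : forall g, \big[Rplus/0]_(h : G) (v h * M h g) = \big[Rplus/0]_(h : G) (v h * (M h g - c g)).
  move=> g; have : \big[Rplus/0]_(h : G) (v h * c g) = 0 by rewrite -big_distrl /= Hv Rmult_0_l.
  move=> H0; rewrite (eq_bigr (fun h => v h * (M h g - c g) + v h * c g)); last by move=> h _; ring.
  by rewrite big_split /= H0 Rplus_0_r.
apply: Rle_trans (_ : \big[Rplus/0]_(g : G) \big[Rplus/0]_(h : G) (Rabs (v h) * (M h g - c g)) <= _).
  apply: big_Rle => g _; rewrite E; apply: Rle_trans (big_Rabs _ _ _) _.
  apply: big_Rle => h _; rewrite Rabs_mult (Rabs_pos_eq _ (Hc h g)); exact: Rle_refl.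
rewrite exchange_big /= big_distrl /=; apply: big_Rle => h _.
rewrite -big_distrr /=; apply: Rmult_le_compat_l; first exact: Rabs_pos.
rewrite big_Rminus Hrho.
rewrite (bigD1 i0) //= /c eqxx big1 ?Rplus_0_r; first exact: Rle_refl.
by move=> g /negbTE ->.
Qed.

Definition err (x : Z -> G -> R) (s : Z) := \big[Rplus/0]_(h : G) Rabs (x s h).

Lemma err_ge0 x s : 0 <= err x s.
Proof. apply: big_Rge0 => h _; exact: Rabs_pos. Qed.

Lemma step_bound (L W : nat) (x : Z -> G -> R) (t : Z) (i0 : G) (dl a B : R) :
  (1 <= L)%N -> (L <= W)%N ->
  (forall l, (l < L)%N -> Rec x (t - Z.of_nat l)%Z) ->
  (forall m, (L <= m)%N -> \big[Rplus/0]_(h : G) x (t - Z.of_nat m)%Z h = 0) ->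
  (forall m, (L <= m)%N -> (m <= W)%N -> err x (t - Z.of_nat m)%Z <= a) ->
  (forall m, (L <= m)%N -> err x (t - Z.of_nat m)%Z <= B) ->
  0 <= dl -> (forall h, dl <= Gm L L h i0) -> 0 <= a ->
  isum (fun m => if (L <= m)%N then gr L m else 0) 1 ->
  err x t <= a - a * dl + B * (1 - sum_f_R0 (fun m => if (L <= m)%N then gr L m else 0) W).
Proof.
move=> HL HLW HR Hsum Ha HB Hdl Hi0 Ha0 Hpi.
set pi := fun m => if (L <= m)%N then gr L m else 0.
have gr_ge0 : forall m, 0 <= gr L m.
  move=> m; rewrite -(Gm_row L m i0); apply: big_Rge0 => g _; exact: Gm_ge0.
have pi_ge0 : forall m, 0 <= pi m by move=> m; rewrite /pi; case: ifP => _ //; exact: Rle_refl.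
have B0 : 0 <= B by apply: Rle_trans (err_ge0 x _) (HB L (leqnn L)).
set z := fun m g => if (L <= m)%N then \big[Rplus/0]_(h : G) (x (t - Z.of_nat m)%Z h * Gm L m h g) else 0.
set y := fun m => \big[Rplus/0]_(g : G) Rabs (z m g).
have Hy0 : forall m, 0 <= y m by move=> m; apply: big_Rge0 => g _; exact: Rabs_pos.
have Hyc : forall m, (L <= m)%N -> forall d, 0 <= d -> (forall h, d <= Gm L m h i0) ->
    y m <= err x (t - Z.of_nat m)%Z * (gr L m - d).
  move=> m Hm d Hd Hdd; rewrite /y /z Hm.
  apply: (contract (Hsum m Hm)) => //; [exact: Gm_ge0 | exact: Gm_row].
have HyB : forall m, y m <= B * pi m.
  move=> m; rewrite /pi; case: ifP => Hm.
    apply: Rle_trans (Hyc m Hm 0 (Rle_refl 0) (fun h => Gm_ge0 _ _ _ _)) _.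
    rewrite Rminus_0_r; apply: Rmult_le_compat_r; [exact: gr_ge0 | exact: HB].
  rewrite /y /z Hm big1 ?Rmult_0_r; first exact: Rle_refl.
  by move=> g _; rewrite Rabs_R0.
have [Y HY] : exists Y, isum y Y.
  apply: (isum_exists (b := fun m => B * pi m)) (isum_scal B Hpi) => m.
  rewrite Rabs_pos_eq //; exact: HyB.
have HS : forall g, exists S, isum (fun m => Rabs (z m g)) S.
  move=> g; apply: (isum_exists (b := y)) HY => m; rewrite Rabs_Rabsolu.
  rewrite /y; apply: (big_Rle_term (F := fun g => Rabs (z m g))) => j; exact: Rabs_pos.
have Hclaim := claim (x := x) (t := t) HL HR.
have He : err x t <= Y.
  pose S g := proj1_sig (constructive_indefinite_description _ (HS g)).
  have HSg : forall g, isum (fun m => Rabs (z m g)) (S g).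
    move=> g; rewrite /S; case: constructive_indefinite_description => //.
  have := isum_big HSg; rewrite -/y => HY'; rewrite (isum_unique HY HY').
  apply: big_Rle => g _; apply: (isum_abs (a := fun m => z m g) _ (Hclaim g) (HSg g)) => m.
  exact: Rle_refl.
apply: Rle_trans He _.
set d := fun m => a * pi m + B * (pi m - (if (m <= W)%N then pi m else 0)) - (if m == L then a * dl else 0).
have HD : isum d (a * 1 + B * (1 - sum_f_R0 pi W) - a * dl).
  apply: isum_minus; last exact: isum_delta.
  apply: isum_plus; first exact: isum_scal.
  apply: isum_scal; apply: isum_minus => //; exact: isum_trunc.
have -> : a - a * dl + B * (1 - sum_f_R0 pi W) = a * 1 + B * (1 - sum_f_R0 pi W) - a * dl by ring.
apply: (isum_le _ HY HD) => m; rewrite /d.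
case: (ltngtP m L) => Hm.
- have Hm' : (L <= m)%N = false by apply/negbTE; rewrite -ltnNge.
  have -> : y m = 0 by rewrite /y /z Hm' big1 // => g _; rewrite Rabs_R0.
  have -> : pi m = 0 by rewrite /pi Hm'.
  case: ifP => _; lra.
- have Hm' : (L <= m)%N by rewrite ltnW.
  have Hy := Hyc m Hm' 0 (Rle_refl 0) (fun h => Gm_ge0 _ _ _ _).
  rewrite Rminus_0_r in Hy; rewrite /pi Hm'.
  case: (leqP m W) => HmW.
  + have := Ha m Hm' HmW => Ha'; have := gr_ge0 m => ?.
    apply: Rle_trans Hy _; rewrite Rminus_diag Rmult_0_r Rplus_0_r Rminus_0_r.
    apply: Rmult_le_compat_r => //.
  + have := HB m Hm' => HB'; have := gr_ge0 m => ?.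
    apply: Rle_trans Hy _; rewrite Rminus_0_r Rminus_0_r.
    have : err x (t - Z.of_nat m)%Z * gr L m <= B * gr L m by apply: Rmult_le_compat_r.
    have : 0 <= a * gr L m by apply: Rmult_le_pos.
    lra.
- subst m; rewrite ?eqxx HLW /pi leqnn Rminus_diag Rmult_0_r Rplus_0_r.
  have Hy := Hyc L (leqnn L) dl Hdl Hi0.
  have Hg : dl <= gr L L.
    rewrite -(Gm_row L L i0); apply: Rle_trans (Hi0 i0) _.
    apply: (big_Rle_term (F := fun g => Gm L L i0 g)) => g; exact: Gm_ge0.
  apply: Rle_trans Hy _.
  have : err x (t - Z.of_nat L)%Z * (gr L L - dl) <= a * (gr L L - dl).
    apply: Rmult_le_compat_r; [lra | exact: Ha].
  lra.
Qed.

Lemma pi_sum (L : nat) (lam : G -> R) : (1 <= L)%N ->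
  \big[Rplus/0]_(g : G) lam g = 1 -> (forall v, Rec (fun _ => lam) v) ->
  isum (fun m => if (L <= m)%N then gr L m else 0) 1.
Proof.
move=> HL Hl HR.
have H := claim (x := fun _ => lam) (t := 0%Z) HL (fun l _ => HR _).
have := isum_big H; rewrite Hl; apply: isum_ext => m.
case: ifP => Hm; last by rewrite big1.
rewrite exchange_big /= (eq_bigr (fun h => lam h * gr L m)).
  by rewrite -big_distrl /= Hl Rmult_1_l.
by move=> h _; rewrite -big_distrr /= Gm_row.
Qed.

Lemma abs_conv (L : nat) (i0 : G) (dl : R) (lam : G -> R) :
  (1 <= L)%N -> 0 < dl -> (forall h, dl <= Gm L L h i0) ->
  \big[Rplus/0]_(g : G) lam g = 1 -> (forall v, Rec (fun _ => lam) v) ->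
  forall eps, 0 < eps -> exists M : nat, forall (x : Z -> G -> R) (r t : Z),
    (forall v, (r < v)%Z -> Rec x v) -> (forall s, \big[Rplus/0]_(h : G) x s h = 0) ->
    (forall s, err x s <= 2) -> (Z.of_nat M <= t - r)%Z -> err x t < eps.
Proof.
move=> HL Hdl0 Hdl Hlam HRlam eps Heps.
have Hpi := pi_sum HL Hlam HRlam.
set d := Rmin dl (1/2).
have Hd0 : 0 < d by rewrite /d; apply: Rmin_glb_lt; lra.
have Hd1 : d <= 1/2 by exact: Rmin_r.
have Hdd : forall h, d <= Gm L L h i0 by move=> h; apply: Rle_trans (Rmin_l _ _) (Hdl h).
set pi := fun m => if (L <= m)%N then gr L m else 0.
have [N HN] := Hpi (d * eps / 4) ltac:(apply: Rdiv_lt_0_compat; [nra | lra]).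
set W := (N + L)%N.
have HLW : (L <= W)%N by rewrite /W leq_addl.
set tau := 1 - sum_f_R0 pi W.
have Htau : Rabs tau < d * eps / 4.
  rewrite /tau Rabs_minus_sym; apply: HN; rewrite /W; apply/leP; rewrite leq_addr //.
have [Q HQ] := pow_lt_1_zero (1 - d) ltac:(rewrite Rabs_pos_eq; lra) (eps / 4) ltac:(lra).
exists (Q * W)%N => x r t HR Hsum Herr.
set A := fun q : nat => 2 * (1 - d) ^ q + 2 * Rabs tau / d.
have key : forall q t, (Z.of_nat (q * W) <= t - r)%Z -> err x t <= A q.
  elim=> [|q IH] t0 Ht0.
    rewrite /A /= Rmult_1_r; have := Herr t0; have : 0 <= 2 * Rabs tau / d.
      apply: Rmult_le_pos; [have := Rabs_pos tau; lra | apply: Rlt_le; exact: Rinv_0_lt_compat].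
    lra.
  rewrite mulSn Nat2Z.inj_add in Ht0.
  have HW0 : (Z.of_nat L <= Z.of_nat W)%Z by apply/Nat2Z.inj_le/leP.
  have Hq0 : (0 <= Z.of_nat (q * W))%Z by lia.
  have HAq : 0 <= A q.
    rewrite /A; apply: Rplus_le_le_0_compat.
      apply: Rmult_le_pos; [lra | apply: pow_le; lra].
    apply: Rmult_le_pos; [have := Rabs_pos tau; lra | apply: Rlt_le; exact: Rinv_0_lt_compat].
  have H1 : forall l, (l < L)%N -> Rec x (t0 - Z.of_nat l)%Z.
    move=> l Hl; apply: HR; have : (Z.of_nat l < Z.of_nat L)%Z by apply/Nat2Z.inj_lt/ltP.
    lia.
  have H2 : forall m, (L <= m)%N -> (m <= W)%N -> err x (t0 - Z.of_nat m)%Z <= A q.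
    move=> m Hm HmW; apply: IH.
    have : (Z.of_nat m <= Z.of_nat W)%Z by apply/Nat2Z.inj_le/leP.
    lia.
  have := @step_bound L W x t0 i0 d (A q) 2 HL HLW H1 (fun m _ => Hsum _) H2 (fun m _ => Herr _)
     (Rlt_le _ _ Hd0) Hdd HAq Hpi.
  rewrite -/pi -/tau => Hst.
  apply: Rle_trans Hst _.
  have E : A q.+1 = (1 - d) * A q + 2 * Rabs tau.
    rewrite /A /=; field; lra.
  rewrite E.
  have : tau <= Rabs tau by exact: Rle_abs.
  nra.
move=> Ht.
apply: Rle_lt_trans (key Q t Ht) _.
rewrite /A.
have H1 : 2 * (1 - d) ^ Q < eps / 2.
  have := HQ Q (le_n Q); rewrite Rabs_pos_eq; [lra | apply: pow_le; lra].
have H2 : 2 * Rabs tau / d < eps / 2.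
  apply/Rlt_div_l => //; nra.
lra.
Qed.
End Abs.


Section Words.
Variable G : finType.
Variable A : nat -> Prop.
Variable th : nat -> R.
Variable P : nat -> G -> G -> R.
Hypothesis hA : forall k, A k -> (0 < k)%N.
Hypothesis hthpos : forall k, A k -> 0 < th k.
Hypothesis hP : forall k, A k -> stochastic (P k).

Lemma wordP_nil i j : wordP P nil i j = Idm i j.
Proof. by []. Qed.

Lemma wordP_cat a b i j : wordP P (a ++ b) i j = \big[Rplus/0]_(h : G) (wordP P b i h * wordP P a h j).
Proof.
elim: a i j => [|a1 a IH] i j /=.
  by have := mm_Idr (wordP P b) i j; rewrite /mm.
rewrite (eq_bigr (fun h => \big[Rplus/0]_(h' : G) (wordP P b i h' * wordP P a h' h * P a1 h j))); last first.
  by move=> h _; rewrite IH big_distrl.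
rewrite exchange_big /=; apply: eq_bigr => h' _; rewrite big_distrr /=; apply: eq_bigr => h _; ring.
Qed.

Lemma wordP_ge0 a i j : List.Forall A a -> 0 <= wordP P a i j.
Proof.
elim: a i j => [|a1 a IH] i j /=; first by rewrite /Idm; case: eqP => _; lra.
move=> HF; inversion HF; subst.
apply: big_Rge0 => h _; apply: Rmult_le_pos; first exact: IH.
by case: (hP H1) => ? _.
Qed.

Lemma wordP_cat_pos a b i h j : List.Forall A a -> List.Forall A b ->
  0 < wordP P b i h -> 0 < wordP P a h j -> 0 < wordP P (a ++ b) i j.
Proof.
move=> Ha Hb H1 H2; rewrite wordP_cat.
apply: Rlt_le_trans (_ : wordP P b i h * wordP P a h j <= _); first exact: Rmult_lt_0_compat.
apply: (big_Rle_term (F := fun h => wordP P b i h * wordP P a h j)) => h'.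
apply: Rmult_le_pos; exact: wordP_ge0.
Qed.

Lemma depth_cat a b : depth (a ++ b) = (depth a + depth b)%N.
Proof. by elim: a => [|x a IH] //=; rewrite IH addnA. Qed.

Lemma depth_pos a : is_word A a -> (0 < depth a)%N.
Proof.
case=> Hne HF; case: a Hne HF => [//|x a] _ HF /=.
inversion HF; subst; have := hA H1; lia.
Qed.

Definition Sret (i0 : G) (n : nat) := exists a, is_word A a /\ depth a = n /\ 0 < wordP P a i0 i0.

Lemma Sret_add i0 m n : Sret i0 m -> Sret i0 n -> Sret i0 (m + n).
Proof.
move=> [a [[Hne HF] [<- Ha]]] [b [[Hne' HF'] [<- Hb]]].
exists (a ++ b); split; [split|split].
- by case: a Hne {HF Ha}.
- by apply/List.Forall_app; split.
- exact: depth_cat.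
- exact: wordP_cat_pos Hb Ha.
Qed.

Lemma Sret_mul i0 m n : (0 < n)%N -> Sret i0 m -> Sret i0 (n * m).
Proof.
move=> Hn Hm; elim: n Hn => [//|[|n] IH] _; first by rewrite mul1n.
rewrite mulSn; apply: Sret_add => //; exact: IH.
Qed.

Lemma Sret_pos i0 n : Sret i0 n -> (0 < n)%N.
Proof. by move=> [a [Ha [<- _]]]; exact: depth_pos. Qed.

Hypothesis haper : aperiodic A P.

Lemma Sret_pair i0 : exists q, Sret i0 q /\ Sret i0 q.+1.
Proof.
case: haper => Hirr Hap.
have [a [Ha Hpos]] := Hirr i0 i0.
have S0 : Sret i0 (depth a) by exists a.
have d0 := depth_pos Ha.
suff : forall d, (0 < d)%N -> forall q, Sret i0 q -> Sret i0 (q + d) -> exists q, Sret i0 q /\ Sret i0 q.+1.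
  move=> H; apply: (H (depth a) d0 (depth a)) => //; exact: Sret_add.
elim/ltn_ind=> d IH Hd q Hq Hqd.
case: (eqVneq d 1%N) => [Hd1|Hd1].
  by exists q; rewrite -addn1 -Hd1.
have [s [Hs Hnd]] : exists s, Sret i0 s /\ ~~ (d %| s)%N.
  apply: NNPP => Hn; apply: (negP Hd1); apply/eqP; apply: (Hap i0) => b Hb Hbp.
  apply: contraT => Hnd; exfalso; apply: Hn; exists (depth b); split => //; by exists b.
have Hrho : (0 < s %% d)%N by rewrite lt0n; apply: contraNneq Hnd => /eqP; rewrite -/(d %| s).
have Hrd : (s %% d < d)%N by rewrite ltn_mod.
case: (posnP (s %/ d)) => Hm.
- apply: (IH (s %% d) Hrd Hrho q Hq).
  have -> : (s %% d = s)%N by rewrite {2}(divn_eq s d) Hm mul0n add0n.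
  by rewrite addnC; apply: Sret_add.
- apply: (IH (s %% d) Hrd Hrho ((s %/ d) * (q + d))%N).
    exact: Sret_mul.
  have -> : ((s %/ d) * (q + d) + s %% d = s + (s %/ d) * q)%N.
    have := divn_eq s d; nia.
  apply: Sret_add => //; exact: Sret_mul.
Qed.

Lemma Sret_large i0 : exists N, forall n, (N <= n)%N -> Sret i0 n.
Proof.
have [q [Hq Hq1]] := Sret_pair i0.
have q0 := Sret_pos Hq.
exists (q * q)%N => n Hn.
have Hb : (n %% q < q)%N by rewrite ltn_mod.
have Ha : (q <= n %/ q)%N by rewrite leq_divRL.
have E : n = ((n %/ q - n %% q) * q + n %% q * q.+1)%N.
  rewrite {1}(divn_eq n q) mulnBl mulnS.
  have : (n %% q * q <= n %/ q * q)%N by apply: leq_mul => //; apply: ltnW; apply: leq_trans Hb Ha.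
  lia.
rewrite E; case: (posnP (n %% q)) => Hb0.
  rewrite Hb0 mul0n addn0 subn0; apply: Sret_mul => //; lia.
apply: Sret_add; apply: Sret_mul => //; lia.
Qed.


Hypothesis hout : forall k, ~ A k -> th k = 0.

Lemma hnn k i j : 0 <= th k * P k i j.
Proof.
case: (classic (A k)) => Hk; last by rewrite hout // Rmult_0_l; exact: Rle_refl.
apply: Rmult_le_pos; [exact: Rlt_le (hthpos Hk) | by case: (hP Hk)].
Qed.

Lemma Gm_sum j m i g : Gm th P j m i g =
  \big[Rplus/0]_(j' < j) (th (m - j') * mm (P (m - j')) (Hm th P j') i g).
Proof.
elim: j => [|j IH] /=; first by rewrite big_ord0.
by rewrite big_ord_recr /= IH.
Qed.

Lemma Hm_term n k i g : (1 <= k)%N -> (k <= n)%N ->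
  th k * mm (P k) (Hm th P (n - k)) i g <= Hm th P n i g.
Proof.
move=> Hk Hkn.
have Hn : (n == 0%N) = false by apply/negbTE; rewrite -lt0n; apply: leq_trans Hkn.
rewrite {2}/Hm Hn Gm_sum.
have Hlt : (n - k < n)%N by rewrite ltn_subrL Hk; apply: leq_trans Hkn.
rewrite (bigD1 (Ordinal Hlt)) //= subKn //.
rewrite -[X in X <= _]Rplus_0_r; apply: Rplus_le_compat; first exact: Rle_refl.
  apply: big_Rge0 => j' _; rewrite /mm big_distrr /=; apply: big_Rge0 => h _.
  rewrite -Rmult_assoc; apply: Rmult_le_pos; [exact: hnn | exact: (Hm_ge0 hnn)].
Qed.

Definition Wt (a : list nat) : R := List.fold_right (fun k acc => th k * acc) 1 a.

Lemma Wt_rcons a b : Wt (rcons a b) = Wt a * th b.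
Proof. elim: a => [|x a IH] /=; rewrite ?IH; ring. Qed.

Lemma Wt_pos a : List.Forall A a -> 0 < Wt a.
Proof.
elim: a => [|x a IH] /= HF; first lra.
inversion HF; subst; apply: Rmult_lt_0_compat; [exact: hthpos | exact: IH].
Qed.

Lemma depth_rcons a b : depth (rcons a b) = (depth a + b)%N.
Proof. by rewrite -cats1 depth_cat /= addn0. Qed.

Lemma wordP_rcons a b i j : wordP P (rcons a b) i j = \big[Rplus/0]_(h : G) (P b i h * wordP P a h j).
Proof.
rewrite -cats1 wordP_cat; apply: eq_bigr => h _; congr (_ * _) => /=.
rewrite (bigD1 i) //= /Idm eqxx Rmult_1_l big1 ?Rplus_0_r // => h' Hh'.
by rewrite eq_sym (negbTE Hh') Rmult_0_l.
Qed.

Lemma Forall_rcons a b : List.Forall A (rcons a b) -> List.Forall A a /\ A b.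
Proof.
rewrite -cats1 => /List.Forall_app [H1 H2]; split => //; by inversion H2.
Qed.

Lemma Hm_word a : List.Forall A a -> forall i j, Wt a * wordP P a i j <= Hm th P (depth a) i j.
Proof.
elim/last_ind: a => [|a b IH] HF i j.
  rewrite /= /Hm /= Rmult_1_l; exact: Rle_refl.
have [Ha Hb] := Forall_rcons HF.
have b1 := hA Hb.
rewrite depth_rcons Wt_rcons wordP_rcons.
apply: Rle_trans (Hm_term i j b1 (leq_addl _ _)); rewrite addnK /mm.
rewrite !big_distrr /=; apply: big_Rle => h _.
have := IH Ha h j; have := hthpos Hb; case: (hP Hb) => HP _; have := HP i h => ? ? ?.
have : 0 <= th b * P b i h by apply: Rmult_le_pos; lra.
nra.
Qed.

Lemma fin_min (f : G -> R) : (forall i, 0 < f i) -> exists dl, 0 < dl /\ forall i, dl <= f i.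
Proof.
move=> Hf.
suff : forall s : seq G, exists dl, 0 < dl /\ forall i, i \in s -> dl <= f i.
  case/(_ (enum G)) => dl [H0 H]; exists dl; split => // i; apply: H; by rewrite mem_enum.
elim=> [|x s [dl [H0 H]]]; first by exists 1; split => //; lra.
exists (Rmin dl (f x)); split; first by apply: Rmin_glb_lt => //.
move=> i; rewrite in_cons => /orP [/eqP ->|Hi]; first exact: Rmin_r.
apply: Rle_trans (Rmin_l _ _) (H i Hi).
Qed.

Lemma K_lemma (i0 : G) : exists L dl, (1 <= L)%N /\ 0 < dl /\ forall h, dl <= Gm th P L L h i0.
Proof.
have [N HN] := Sret_large i0.
case: haper => Hirr _.
have Hb : forall i, exists b, is_word A b /\ 0 < wordP P b i i0.
  move=> i; have [b [H1 H2]] := Hirr i i0; by exists b.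
pose bw i := proj1_sig (constructive_indefinite_description _ (Hb i)).
have Hbw : forall i, is_word A (bw i) /\ 0 < wordP P (bw i) i i0.
  move=> i; rewrite /bw; case: constructive_indefinite_description => //.
set L := (N + \sum_(i : G) depth (bw i))%N.
have Hd : forall i, (depth (bw i) <= L)%N /\ (N <= L - depth (bw i))%N.
  move=> i; have : (depth (bw i) <= \sum_(i : G) depth (bw i))%N.
    by rewrite (bigD1 i) //= leq_addr.
  rewrite /L; lia.
have HL : (1 <= L)%N.
  have := depth_pos (proj1 (Hbw i0)); have := proj1 (Hd i0); lia.
have Hpos : forall i, 0 < Gm th P L L i i0.
  move=> i; have [c [[Hcne HcF] [Hcd Hcp]]] := HN _ (proj2 (Hd i)).
  have [[Hbne HbF] Hbp] := Hbw i.
  have HF : List.Forall A (c ++ bw i) by apply/List.Forall_app.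
  have Hdep : depth (c ++ bw i) = L by rewrite depth_cat Hcd subnK //; exact: (proj1 (Hd i)).
  have := Hm_word HF i i0; rewrite Hdep /Hm.
  have -> : (L == 0%N) = false by apply/negbTE; rewrite -lt0n.
  have := Wt_pos HF; have := wordP_cat_pos HcF HbF Hbp Hcp => ? ? ?.
  have : 0 < Wt (c ++ bw i) * wordP P (c ++ bw i) i i0 by apply: Rmult_lt_0_compat.
  lra.
have [dl [H0 H]] := fin_min Hpos.
by exists L, dl.
Qed.

End Words.


Section Paths.
Variable G : finType.

Definition fext m (gs : {ffun 'I_m -> G}) (g : G) : {ffun 'I_m.+1 -> G} :=
  [ffun i : 'I_m.+1 => oapp gs g (insub (nat_of_ord i))].
Definition frestr m (gs : {ffun 'I_m.+1 -> G}) : {ffun 'I_m -> G} :=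
  [ffun j : 'I_m => gs (widen_ord (leqnSn m) j)].

Lemma frestr_fext m gs g : frestr (@fext m gs g) = gs.
Proof.
apply/ffunP => j; rewrite !ffunE /= insubT ?ltn_ord //= => Hj.
by congr (gs _); apply: val_inj.
Qed.

Lemma fext_last m gs g : @fext m gs g ord_max = g.
Proof. by rewrite ffunE insubF //= ltnn. Qed.

Lemma fext_frestr m (gs : {ffun 'I_m.+1 -> G}) : fext (frestr gs) (gs ord_max) = gs.
Proof.
apply/ffunP => i; rewrite ffunE; case: insubP => [j Hj Ej|Hi] /=.
  by rewrite ffunE; congr (gs _); apply: val_inj; rewrite /= Ej.
congr (gs _); apply: val_inj => /=; have := ltn_ord i; rewrite ltnS leq_eqVlt (negbTE Hi) orbF.
by move/eqP.
Qed.

Lemma big_fext m (F : {ffun 'I_m.+1 -> G} -> R) :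
  \big[Rplus/0]_(gs : {ffun 'I_m.+1 -> G}) F gs =
  \big[Rplus/0]_(gs : {ffun 'I_m -> G}) \big[Rplus/0]_(g : G) F (fext gs g).
Proof.
rewrite pair_big /=.
rewrite (reindex (fun p : {ffun 'I_m -> G} * G => fext p.1 p.2)) //=.
exists (fun gs => (frestr gs, gs ord_max)) => [[gs g] _|gs _] /=.
  by rewrite frestr_fext fext_last.
exact: fext_frestr.
Qed.
End Paths.

Section Proc.
Variable G : finType.
Variable A : nat -> Prop.
Variable th : nat -> R.
Variable P : nat -> G -> G -> R.
Hypothesis hA : forall k, A k -> (0 < k)%N.
Hypothesis hthpos : forall k, A k -> 0 < th k.
Hypothesis hout : forall k, ~ A k -> th k = 0.
Hypothesis hP : forall k, A k -> stochastic (P k).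
Hypothesis hsum : isum th 1.

Lemma th0 : th 0%N = 0.
Proof. apply: hout => H; have := hA H; by []. Qed.

Lemma thP_bound k x g : Rabs (th k * P k x g) <= th k.
Proof.
case: (classic (A k)) => Hk; last by rewrite hout // Rmult_0_l Rabs_R0; exact: Rle_refl.
have [H1 H2] := hP Hk.
have Hle : P k x g <= 1.
  rewrite -(H2 x); exact: (big_Rle_term (F := fun j => P k x j)).
have := hthpos Hk; have := H1 x g => ? ?.
rewrite Rabs_pos_eq; [nra | nra].
Qed.

Lemma thP_ge0 k x g : 0 <= th k * P k x g.
Proof.
case: (classic (A k)) => Hk; last by rewrite hout // Rmult_0_l; exact: Rle_refl.
have [H1 _] := hP Hk; have := hthpos Hk; have := H1 x g => ? ?; nra.
Qed.

Lemma th_ge0 k : 0 <= th k.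
Proof. case: (classic (A k)) => Hk; [exact: Rlt_le (hthpos Hk) | rewrite hout //; exact: Rle_refl]. Qed.

Lemma throw k x : th k * \big[Rplus/0]_(j : G) P k x j = th k.
Proof.
case: (classic (A k)) => Hk; last by rewrite hout // Rmult_0_l.
by have [_ H2] := hP Hk; rewrite H2 Rmult_1_r.
Qed.

Lemma pker_spec w t g : isum (fun k => th k * P k (w (t - Z.of_nat k)%Z) g) (pker th P w t g).
Proof.
rewrite /pker /series; apply: epsilon_spec.
apply: (isum_exists (b := th)) hsum => k; exact: thP_bound.
Qed.

Lemma pker_ge0 w t g : 0 <= pker th P w t g.
Proof. apply: (isum_ge0 _ (pker_spec w t g)) => k; exact: thP_ge0. Qed.

Lemma pker_sum1 w t : \big[Rplus/0]_(g : G) pker th P w t g = 1.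
Proof.
have := isum_big (fun g => pker_spec w t g) => H.
apply: (isum_unique H); apply: isum_ext hsum => k.
by rewrite -big_distrr /= throw.
Qed.

Lemma pker_ext w1 w2 t g : (forall k, (0 < k)%N -> w1 (t - Z.of_nat k)%Z = w2 (t - Z.of_nat k)%Z) ->
  pker th P w1 t g = pker th P w2 t g.
Proof.
move=> H; rewrite /pker; congr series; apply: functional_extensionality => k.
case: (posnP k) => [->|Hk]; first by rewrite th0 !Rmult_0_l.
by rewrite H.
Qed.

Lemma ext_le w r m (gs : {ffun 'I_m -> G}) t : (t <= r)%Z -> ext w r gs t = w t.
Proof. by move=> H; rewrite /ext; move/Z.leb_le: H => ->. Qed.

Lemma ext_in w r m (gs : {ffun 'I_m -> G}) (i : 'I_m) : ext w r gs (r + 1 + Z.of_nat i)%Z = gs i.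
Proof.
rewrite /ext; have -> : ((r + 1 + Z.of_nat i) <=? r)%Z = false by apply/Z.leb_gt; lia.
have E : Z.to_nat (r + 1 + Z.of_nat i - r - 1) = i by lia.
rewrite E insubT ?ltn_ord //= => Hi; congr (gs _); exact: val_inj.
Qed.

Lemma ext_fext w r m (gs : {ffun 'I_m -> G}) g t : (t <= r + Z.of_nat m)%Z ->
  ext w r (fext gs g) t = ext w r gs t.
Proof.
move=> Ht; rewrite /ext; case: Z.leb_spec => // Hr.
have Hlt : (Z.to_nat (t - r - 1) < m)%N by apply/ltP; lia.
rewrite insubT; first by apply: ltnW.
move=> H1 /=; rewrite ffunE /= insubT //=.
Qed.

Lemma ext_fext_last w r m (gs : {ffun 'I_m -> G}) g : ext w r (fext gs g) (r + 1 + Z.of_nat m)%Z = g.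
Proof.
have := ext_in w r (fext gs g) ord_max; rewrite fext_last; exact.
Qed.

Lemma path_prob_S w r m (gs : {ffun 'I_m -> G}) g :
  path_prob th P w r (fext gs g) = path_prob th P w r gs * pker th P (ext w r gs) (r + 1 + Z.of_nat m)%Z g.
Proof.
rewrite /path_prob big_ord_recr /=; congr (_ * _).
  apply: eq_bigr => i _.
  have -> : fext gs g (widen_ord (leqnSn m) i) = gs i.
    by rewrite ffunE /= insubT ?ltn_ord //= => Hi; congr (gs _); exact: val_inj.
  apply: pker_ext => k Hk; apply: ext_fext; have := ltn_ord i; move/ltP => ?; lia.
rewrite fext_last; apply: pker_ext => k Hk; apply: ext_fext; lia.
Qed.

Lemma path_total w r m : \big[Rplus/0]_(gs : {ffun 'I_m -> G}) path_prob th P w r gs = 1.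
Proof.
elim: m => [|m IH].
  have gs0 : {ffun 'I_0 -> G} by apply: finfun; case=> i Hi; by rewrite ltn0 in Hi.
  rewrite (bigD1 gs0) //= big1 ?Rplus_0_r.
    by rewrite /path_prob big_ord0.
  move=> gs Hgs; exfalso; move/negP: Hgs; apply; apply/eqP/ffunP; by case.
rewrite big_fext -IH; apply: eq_bigr => gs _.
rewrite (eq_bigr (fun g => path_prob th P w r gs * pker th P (ext w r gs) (r + 1 + Z.of_nat m)%Z g)).
  by rewrite -big_distrr /= pker_sum1 Rmult_1_r.
by move=> g _; rewrite path_prob_S.
Qed.

Lemma marg w r m m' (Phi : (Z -> G) -> R) : (m <= m')%N ->
  (forall u v, (forall t, (t <= r + Z.of_nat m)%Z -> u t = v t) -> Phi u = Phi v) ->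
  \big[Rplus/0]_(gs : {ffun 'I_m' -> G}) (path_prob th P w r gs * Phi (ext w r gs)) =
  \big[Rplus/0]_(gs : {ffun 'I_m -> G}) (path_prob th P w r gs * Phi (ext w r gs)).
Proof.
move=> Hm HPhi; elim: m' Hm => [|m' IH] Hm.
  by move: Hm; rewrite leqn0 => /eqP E; subst m.
case: (eqVneq m m'.+1) => [E|Hne]; first by subst m.
have Hm' : (m <= m')%N by rewrite -ltnS ltn_neqAle Hne Hm.
rewrite big_fext -IH //; apply: eq_bigr => gs _.
rewrite (eq_bigr (fun g => path_prob th P w r gs * pker th P (ext w r gs) (r + 1 + Z.of_nat m')%Z g * Phi (ext w r gs))).
  by rewrite -big_distrl -big_distrr /= pker_sum1 Rmult_1_r.
move=> g _; rewrite path_prob_S; congr (_ * _); apply: HPhi => t Ht; apply: ext_fext.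
move/leP: Hm' => ?; lia.
Qed.


Lemma sum_ind (x : G) (F : G -> R) : \big[Rplus/0]_(h : G) ((if x == h then 1 else 0) * F h) = F x.
Proof.
rewrite (bigD1 x) //= eqxx Rmult_1_l big1 ?Rplus_0_r // => h Hh.
by rewrite eq_sym (negbTE Hh) Rmult_0_l.
Qed.

Lemma lawX_le w r s h : (s <= r)%Z -> lawX th P r w s h = if w s == h then 1 else 0.
Proof. by move=> H; rewrite /lawX; move/Z.leb_le: H => ->. Qed.

Lemma lawX_gt w r s h : (r < s)%Z -> lawX th P r w s h =
  \big[Rplus/0]_(gs : {ffun 'I_(Z.to_nat (s - r)) -> G})
     (path_prob th P w r gs * (if ext w r gs s == h then 1 else 0)).
Proof.
move=> H; rewrite /lawX; have -> : (s <=? r)%Z = false by apply/Z.leb_gt.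
rewrite big_mkcond /=; apply: eq_bigr => gs _; case: ifP => _; ring.
Qed.

Lemma path_prob_ge0 w r m (gs : {ffun 'I_m -> G}) : 0 <= path_prob th P w r gs.
Proof.
rewrite /path_prob; elim/big_rec: _ => [|i y _ Hy]; first lra.
apply: Rmult_le_pos => //; exact: pker_ge0.
Qed.

Lemma lawX_ge0 w r s h : 0 <= lawX th P r w s h.
Proof.
case: (Z.le_gt_cases s r) => H.
  rewrite lawX_le //; case: eqP => _; lra.
rewrite lawX_gt //; apply: big_Rge0 => gs _; apply: Rmult_le_pos; first exact: path_prob_ge0.
case: eqP => _; lra.
Qed.

Lemma lawX_sum w r s : \big[Rplus/0]_(h : G) lawX th P r w s h = 1.
Proof.
case: (Z.le_gt_cases s r) => H.
  rewrite (eq_bigr (fun h => (if w s == h then 1 else 0) * 1)); first by rewrite sum_ind.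
  by move=> h _; rewrite lawX_le // Rmult_1_r.
rewrite (eq_bigr (fun h => lawX th P r w s h)) //.
rewrite (eq_bigr _ (fun h _ => lawX_gt w h H)) exchange_big /=.
transitivity (\big[Rplus/0]_(gs : {ffun 'I_(Z.to_nat (s - r)) -> G}) path_prob th P w r gs); last exact: path_total.
apply: eq_bigr => gs _.
rewrite -big_distrr /= (eq_bigr (fun h => (if ext w r gs s == h then 1 else 0) * 1)).
  by rewrite sum_ind !Rmult_1_r.
by move=> h _; rewrite Rmult_1_r.
Qed.

Lemma lawX_rec w r n g : (r < n)%Z ->
  isum (fun k => th k * \big[Rplus/0]_(h : G) (lawX th P r w (n - Z.of_nat k)%Z h * P k h g)) (lawX th P r w n g).
Proof.
move=> Hn; rewrite lawX_gt //.
have E : Z.to_nat (n - r) = (Z.to_nat (n - r - 1)).+1 by lia.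
have En : n = (r + 1 + Z.of_nat (Z.to_nat (n - r - 1)))%Z by lia.
move: E; set m0 := Z.to_nat (n - r - 1) => E.
rewrite E big_fext.
rewrite (eq_bigr (fun gs => path_prob th P w r gs * pker th P (ext w r gs) n g)); last first.
  move=> gs _; rewrite (eq_bigr (fun g' => (if g' == g then 1 else 0) * (path_prob th P w r gs * pker th P (ext w r gs) n g'))).
    rewrite (bigD1 g) //= eqxx Rmult_1_l big1 ?Rplus_0_r // => h /negbTE ->; ring.
  move=> g' _; rewrite path_prob_S {1}En ext_fext_last -En; case: eqP => _; ring.
have := isum_big (fun gs : {ffun 'I_m0 -> G} => isum_scal (path_prob th P w r gs) (pker_spec (ext w r gs) n g)).
apply: isum_ext => k.
case: (posnP k) => [->|Hk]; first by rewrite th0 Rmult_0_l big1 // => gs _; rewrite Rmult_0_l Rmult_0_r.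
set s := (n - Z.of_nat k)%Z.
case: (Z.le_gt_cases s r) => Hs.
- rewrite (eq_bigr (fun h => (if w s == h then 1 else 0) * P k h g)); last by move=> h _; rewrite lawX_le.
  rewrite sum_ind (eq_bigr (fun gs => path_prob th P w r gs * (th k * P k (w s) g))); last first.
    by move=> gs _; rewrite ext_le.
  by rewrite -big_distrl /= path_total Rmult_1_l.
- rewrite [in RHS](eq_bigr (fun h => \big[Rplus/0]_(gs : {ffun 'I_(Z.to_nat (s - r)) -> G})
     (path_prob th P w r gs * (if ext w r gs s == h then 1 else 0) * P k h g))); last first.
    by move=> h _; rewrite lawX_gt // big_distrl.
  rewrite [in RHS]exchange_big /= [RHS]big_distrr /=.
  rewrite [RHS](eq_bigr (fun gs => path_prob th P w r gs * (th k * P k (ext w r gs s) g))); last first.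
    move=> gs _; rewrite -(sum_ind (ext w r gs s) (fun h => path_prob th P w r gs * (th k * P k h g))) big_distrr /=; apply: eq_bigr => h _; ring.
  rewrite (@marg w r (Z.to_nat (s - r)) m0 (fun u => th k * P k (u s) g)) //.
  + apply/leP; rewrite /m0 /s; lia.
  + move=> u v Huv; rewrite Huv //; lia.
Qed.
End Proc.


Section Main.
Variable G : finType.
Variable A : nat -> Prop.
Variable theta : nat -> R.
Variable P : nat -> G -> G -> R.
Hypothesis hA : forall k, A k -> (0 < k)%N.
Hypothesis htheta_pos : forall k, A k -> 0 < theta k.
Hypothesis htheta_out : forall k, ~ A k -> theta k = 0.
Hypothesis htheta_sum : infinite_sum theta 1.
Hypothesis hP : forall k, A k -> stochastic (P k).
Hypothesis haper : aperiodic A P.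
Variable Q : G -> G -> R.
Hypothesis hQ : is_Phat theta P Q.
Variable lam : G -> R.
Hypothesis hlam : invariant_dist Q lam.

Lemma main_sec (n : Z) (w : Z -> G) (eps : R) : 0 < eps ->
    exists r0 : Z, forall r : Z, (r <= r0)%Z ->
      forall g : G, Rabs (lawX theta P r w n g - lam g) < eps.
Proof.
move=> Heps.
have th0 := th0 hA htheta_out.
have hnn := thP_ge0 htheta_pos htheta_out hP.
have hrow := throw htheta_out hP.
case: hlam => Hlam0 [Hlamsum Hlaminv].
have [i0 _] : exists i0 : G, true.
  case: (pickP (fun _ : G => true)) => [i0 _|H0]; first by exists i0.
  exfalso; move: Hlamsum; rewrite big_pred0 //; lra.
have [L [dl [HL [Hdl Hb]]]] := K_lemma hA htheta_pos hP haper htheta_out i0.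
have HRlam : forall v, Rec theta P (fun _ => lam) v.
  move=> v g; rewrite -(Hlaminv g).
  have := isum_big (fun i => isum_scal (lam i) (hQ i g)).
  apply: isum_ext => k; rewrite big_distrr /=; apply: eq_bigr => h _; ring.
have [M HM] := abs_conv th0 hnn hrow HL Hdl Hb Hlamsum HRlam Heps.
exists (n - Z.of_nat M)%Z => r Hr g.
set x := fun v h => lawX theta P r w v h - lam h.
have HRx : forall v, (r < v)%Z -> Rec theta P x v.
  move=> v Hv h; have := isum_minus (lawX_rec hA htheta_pos htheta_out hP htheta_sum w h Hv) (HRlam v h).
  apply: isum_ext => k; rewrite /x -Rmult_minus_distr_l -big_Rminus; congr (_ * _).
  apply: eq_bigr => h' _; ring.
have Hsum0 : forall s, \big[Rplus/0]_(h : G) x s h = 0.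
  move=> s; rewrite /x big_Rminus (lawX_sum hA htheta_pos htheta_out hP htheta_sum) Hlamsum; ring.
have Herr : forall s, err x s <= 2.
  move=> s; rewrite /err.
  apply: Rle_trans (_ : \big[Rplus/0]_(h : G) (lawX theta P r w s h + lam h) <= _).
    apply: big_Rle => h _; rewrite /x.
    have := lawX_ge0 htheta_pos htheta_out hP htheta_sum w r s h; have := Hlam0 h => ? ?.
    apply: Rle_trans (Rabs_triang _ _) _; rewrite Rabs_Ropp !Rabs_pos_eq //; lra.
  rewrite big_split /= (lawX_sum hA htheta_pos htheta_out hP htheta_sum) Hlamsum; lra.
have := HM x r n HRx Hsum0 Herr ltac:(lia).
apply: Rle_lt_trans.
rewrite /err; exact: (big_Rle_term (F := fun h => Rabs (x n h)) g (fun _ => Rabs_pos _)).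
Qed.
End Main.

Theorem mainTheorem7 (G : finType) (A : nat -> Prop) (theta : nat -> R)
  (P : nat -> G -> G -> R)
  (hA : forall k, A k -> (0 < k)%N)
  (htheta_pos : forall k, A k -> 0 < theta k)
  (htheta_out : forall k, ~ A k -> theta k = 0)
  (htheta_sum : infinite_sum theta 1)
  (hP : forall k, A k -> stochastic (P k))
  (hgcd : gcd_one A)
  (haper : aperiodic A P)
  (Q : G -> G -> R) (hQ : is_Phat theta P Q)
  (lam : G -> R) (hlam : invariant_dist Q lam) :
  forall (n : Z) (w : Z -> G) (eps : R), 0 < eps ->
    exists r0 : Z, forall r : Z, (r <= r0)%Z ->
      forall g : G, Rabs (lawX theta P r w n g - lam g) < eps.
Proof.
move=> n w eps Heps.
exact: (main_sec hA htheta_pos htheta_out htheta_sum hP haper hQ hlam n w Heps).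
Qed.
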